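(* Assume condition (ii)' with $\zeta$ having a finite exponential moment ($\mathbb E e^{u\zeta}<\infty$ for some $u>0$). Let $a,\varepsilon>0$ with $1/2-\varepsilon>2a$. There exist $t_0>0$ and $c>0$ such that for all $t>t_0$, all $d\le t^a$, all $\gamma\in(0,1/2-2a-\varepsilon)$ and all $x\in W_{t,\varepsilon}$, \[\Delta(x)\ge\Big(1-\frac{c}{t^\gamma}\Big)h(x).\]
   Context: Likelihood ratio order $U\le_{lr}W$: $\mathbf P(U\in A)\mathbf P(W\in B)\ge\mathbf P(U\in B)\mathbf P(W\in A)$ for measurable $A,B$ with $\sup A\le\inf B$. Condition (ii)' for a real random variable $X$: there is $\zeta$ with values in $[1,\infty)$ such that for all $\theta\ge0$, $(X-\theta)\mid\{X>\theta\}\le_{lr}\zeta$ and $-(X+\theta)\mid\{X<-\theta\}\le_{lr}\zeta$. With $\zeta_1,\dots,\zeta_{d-1}$ i.i.d. copies of $\zeta$, $\eta_1=0$, $\eta_j=\sum_{i<j}\zeta_i$, define $h(x)=\mathbb E\big[\prod_{1\le i<j\le d}(x_j-x_i+\eta_j-\eta_i)\big]$ and $\Delta(x)=\prod_{1\le i<j\le d}(x_j-x_i)$. $W_{t,\varepsilon}=\{x\in\mathbb R^d:x_{j+1}-x_j>t^{1/2-\varepsilon},1\le j<d\}$. *)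

(* Defs.v *)
From HB Require Import structures.
From mathcomp Require Import all_boot all_order all_algebra.
From mathcomp Require Import all_classical all_reals all_analysis.
Set Implicit Arguments. Unset Strict Implicit. Unset Printing Implicit Defensive.
Import Order.TTheory GRing.Theory Num.Theory.
Local Open Scope classical_set_scope.
Local Open Scope ring_scope.

Section Defs.
Context (R : realType) (dT : measure_display) (T : measurableType dT).

Definition lr_le (mu nu : set R -> \bar R) : Prop :=
  forall A B : set R, measurable A -> measurable B ->
    (forall a b, A a -> B b -> a <= b) ->
    (mu B * nu A <= mu A * nu B)%E.

(* Conditional
   laws are taken unnormalized (lr_le is invariant under positive scaling). *)
Definition condition_ii' (P : probability T R) (X zeta : T -> R) : Prop :=
  forall theta : R, 0 <= theta ->
    lr_le (fun A => P ([set w | theta < X w] `&` [set w | A (X w - theta)]))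
          (fun A => P (zeta @^-1` A)) /\
    lr_le (fun A => P ([set w | X w < - theta] `&` [set w | A (- (X w + theta))]))
          (fun A => P (zeta @^-1` A)).

Definition mutually_independent (P : probability T R) (Z : nat -> T -> R) : Prop :=
  forall (S : seq nat) (B : nat -> set R), uniq S ->
    (forall i, measurable (B i)) ->
    P (\bigcap_(i in [set` S]) (Z i @^-1` B i)) =
    (\prod_(i <- S) P (Z i @^-1` B i))%E.

(* eta_j = sum_{i<j} Z_i (0-based: eta_0 = 0) *)
Definition eta (Z : nat -> T -> R) (j : nat) (w : T) : R := \sum_(k < j) Z k w.

Definition Delta (d : nat) (x : 'I_d -> R) : R :=
  \prod_(i < d) \prod_(j < d | (i < j)%N) (x j - x i).

Definition h (P : probability T R) (Z : nat -> T -> R) (d : nat) (x : 'I_d -> R)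
  : \bar R :=
  (\int[P]_w (\prod_(i < d) \prod_(j < d | (i < j)%N)
                (x j - x i + eta Z j w - eta Z i w))%:E)%E.
End Defs.

Definition Wte (R : realType) (d : nat) (t eps : R) : set ('I_d -> R) :=
  [set x | forall i j : 'I_d, val j = (val i).+1 -> t `^ (1/2 - eps) < x j - x i].

(* Main.v *)
Require Import Defs.
From HB Require Import structures.
From mathcomp Require Import all_boot all_order all_algebra.
From mathcomp Require Import all_classical all_reals all_analysis.
From mathcomp Require Import measurable_realfun.
From mathcomp Require Import ring lra.
Import Order.TTheory GRing.Theory Num.Theory.
Local Open Scope classical_set_scope.
Local Open Scope ring_scope.

Section Real.
Context (R : realType).


Lemma sum_const_seq (I : Type) (r : seq I) (c : R) : \sum_(k <- r) c = c *+ size r.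
Proof. by elim: r => [|a r ih]; rewrite ?big_nil ?big_cons ?ih ?mulrS. Qed.

Lemma jensen_seq (I : Type) (r : seq I) (y : I -> R) : (0 < size r)%N ->
  expR (\sum_(k <- r) y k) <= (size r)%:R^-1 * \sum_(k <- r) expR ((size r)%:R * y k).
Proof.
move=> hr; set n := (size r)%:R; set m := \sum_(k <- r) y k.
have n0 : 0 < n by rewrite ltr0n.
have key k : expR m * (1 + (n * y k - m)) <= expR (n * y k).
  have -> : n * y k = m + (n * y k - m) by ring.
  rewrite expRD; apply: ler_wpM2l; first exact: expR_ge0.
  have -> : m + (n * y k - m) - m = n * y k - m by ring.
  exact: expR_ge1Dx.
have hs : \sum_(k <- r) expR m * (1 + (n * y k - m)) = n * expR m.
  rewrite -mulr_sumr big_split /= sum_const_seq big_split /= sumrN sum_const_seq.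
  rewrite -mulr_sumr -/m.
  have e1 : 1 *+ size r = n :> R by [].
  have e2 : m *+ size r = m * n by rewrite -mulr_natr.
  rewrite e1 e2; ring.
rewrite ler_pdivlMl //.
rewrite -hs; apply: ler_sum => k _; exact: key.
Qed.

Lemma exp_small (u lam z : R) : 0 < u -> 0 <= lam -> lam <= u / 2 -> 0 <= z ->
  expR (lam * z) <= 1 + (2 * lam / u) * expR (u * z).
Proof.
move=> u0 l0 lu z0.
set A := expR (lam * z); set B := expR (u * z / 2).
have A0 : 0 < A by exact: expR_gt0.
have B0 : 0 < B by exact: expR_gt0.
have h1 : A <= 1 + lam * z * A.
  have := expR_ge1Dx (- (lam * z)); rewrite expRN => h.
  have : (1 - lam * z) * A <= A^-1 * A by rewrite ler_wpM2r // ltW.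
  rewrite mulVf ?gt_eqF // mulrBl mul1r; move=> ?; lra.
have h2 : A <= B by rewrite ler_expR; nra.
have h3 : u * z / 2 <= B by have := expR_ge1Dx (u * z / 2); rewrite -/B; lra.
have h4 : expR (u * z) = B * B by rewrite -expRD; congr expR; field.
rewrite h4.
have h5 : lam * z * A <= lam * z * B by apply: ler_wpM2l => //; nra.
have h6 : z <= 2 / u * B.
  by rewrite mulrAC ler_pdivlMr //; nra.
have h7 : lam * z * B <= lam * (2 / u * B) * B.
  by rewrite -mulrA -[X in _ <= X]mulrA; apply: ler_wpM2l => //; apply: ler_wpM2r => //; exact: ltW.
have -> : 2 * lam / u * (B * B) = lam * (2 / u * B) * B by rewrite /=; field; lra.
lra.
Qed.

Lemma jensen_fin (I : finType) (y : I -> R) : (0 < #|I|)%N ->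
  expR (\sum_i y i) <= #|I|%:R^-1 * \sum_i expR (#|I|%:R * y i).
Proof.
move=> hI; have := @jensen_seq I (enum I) y; rewrite -cardT => /(_ hI).
by rewrite !big_enum /=.
Qed.
End Real.

Section Law.
Context (R : realType) (dT : measure_display) (T : measurableType dT) (P : probability T R).


Lemma law_integral (Y Z : T -> R) (mY : measurable_fun setT Y) (mZ : measurable_fun setT Z)
  (hlaw : forall A, measurable A -> P (Y @^-1` A) = P (Z @^-1` A))
  (phi : R -> R) (mphi : measurable_fun setT phi) (phi0 : forall y, 0 <= phi y) :
  (\int[P]_w (phi (Y w))%:E = \int[P]_w (phi (Z w))%:E)%E.
Proof.
have mphiE : measurable_fun setT (EFin \o phi) by exact/measurable_EFinP.
have h1 := @ge0_integral_pushforward _ _ _ _ R Y mY P setT (EFin \o phi) measurableT mphiE (fun y _ => phi0 y).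
have h2 := @ge0_integral_pushforward _ _ _ _ R Z mZ P setT (EFin \o phi) measurableT mphiE (fun y _ => phi0 y).
rewrite /= !preimage_setT in h1 h2.
rewrite -[LHS]h1 -[RHS]h2; apply: eq_measure_integral => A mA _.
exact: hlaw.
Qed.

End Law.
Section Main.
Context (R : realType) (dT : measure_display) (T : measurableType dT)
  (P : probability T R) (zeta : T -> R) (Z : nat -> T -> R)
  (mzeta : measurable_fun setT zeta) (mZ : forall n, measurable_fun setT (Z n))
  (zeta_ge1 : forall w, 1 <= zeta w)
  (Z_copies : forall n (A : set R), measurable A ->
     P (Z n @^-1` A) = P (zeta @^-1` A)).

Definition Fw {d} (x : 'I_d -> R) w :=
  \prod_(i < d) \prod_(j < d | (i < j)%N) (x j - x i + Defs.eta Z j w - Defs.eta Z i w).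

Lemma eta_diff (i j : nat) w : (i <= j)%N ->
  Defs.eta Z j w - Defs.eta Z i w = \sum_(i <= k < j) Z k w.
Proof.
move=> hij; rewrite /Defs.eta -!(big_mkord (fun=> true) (fun k => Z k w)).
by rewrite (@big_cat_nat _ _ _ i 0 j _ _ (leq0n i) hij) /= addrC addrK.
Qed.

Lemma meta j : measurable_fun setT (Defs.eta Z j).
Proof. by rewrite /Defs.eta; apply: measurable_sum => k; exact: mZ. Qed.

Lemma mF d (x : 'I_d -> R) : measurable_fun setT (Fw x).
Proof.
rewrite /Fw; apply: measurable_prod => i _.
under eq_fun do rewrite big_mkcond /=.
apply: measurable_prod => j _; case: (i < j)%N; last exact: measurable_cst.
apply: measurable_funB; last exact: meta.
by apply: measurable_funD; [exact: measurable_cst | exact: meta].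
Qed.

Section Pt.
Variables (d : nat) (x : 'I_d -> R) (s : R) (s0 : 0 < s)
  (hx : forall i j : 'I_d, val j = (val i).+1 -> s < x j - x i).

Lemma gap (i j : 'I_d) : (i <= j)%N -> (j - i)%:R * s <= x j - x i.
Proof.
move=> hij; have [n hn] : exists n, val j = (i + n)%N by exists (j - i)%N; rewrite subnKC.
elim: n j hij hn => [|n ih] j hij hn.
  have -> : j = i by apply: val_inj; rewrite /= hn addn0.
  by rewrite subnn mul0r subrr.
have hj' : (i + n < d)%N by have := ltn_ord j; rewrite hn addnS; exact: ltnW.
pose j' := Ordinal hj'.
have h2 := ih j' (leq_addr _ _) erefl.
have h := hx j' j; rewrite hn addnS in h; have {}h := h erefl.
rewrite /= addKn in h2; rewrite hn addKn.
have -> : x j - x i = (x j - x j') + (x j' - x i) by ring.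
by rewrite -addn1 natrD mulrDl mul1r addrC; apply: lerD => //; exact: ltW.
Qed.

Definition rho (i j : 'I_d) w := (\sum_(i <= k < j) `|Z k w|) / ((j - i)%:R * s).

Lemma factor_bound (i j : 'I_d) w : (i < j)%N ->
  `|x j - x i + Defs.eta Z j w - Defs.eta Z i w| <= (x j - x i) * expR (rho i j w).
Proof.
move=> hij.
have hg := gap i j (ltnW hij).
have m0 : 0 < (j - i)%:R * s by rewrite mulr_gt0 // ltr0n subn_gt0.
have g0 : 0 < x j - x i by exact: lt_le_trans hg.
rewrite -addrA eta_diff; last exact: ltnW.
rewrite /rho.
move: hg m0 g0; set g := x j - x i; set m := ((j - i)%:R * s) => hg m0 g0.
set S := \sum_(i <= k < j) `|Z k w|.
have hD : `|\sum_(i <= k < j) Z k w| <= S by exact: ler_norm_sum.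
have S0 : 0 <= S by apply: sumr_ge0 => k _; exact: normr_ge0.
apply: (le_trans (ler_normD _ _)).
rewrite (ger0_norm (ltW g0)).
have e1 : g + S <= g * expR (S / g).
  have -> : g + S = g * (1 + S / g) by field; exact: lt0r_neq0.
  by apply: ler_wpM2l; [exact: ltW | exact: expR_ge1Dx].
have e2 : S / g <= S / m.
  by apply: ler_wpM2l => //; rewrite lef_pV2 ?posrE.
apply: (@le_trans _ _ (g + S)); first by rewrite lerD2l.
apply: le_trans e1 _; apply: ler_wpM2l; first exact: ltW.
by rewrite ler_expR.
Qed.

Lemma F_bound w : `|Fw x w| <= Defs.Delta x * expR (\sum_(i < d) \sum_(j < d | (i < j)%N) rho i j w).
Proof.
have -> : Defs.Delta x * expR (\sum_(i < d) \sum_(j < d | (i < j)%N) rho i j w)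
   = \prod_(i < d) \prod_(j < d | (i < j)%N) ((x j - x i) * expR (rho i j w)).
  rewrite /Defs.Delta expR_sum -big_split /=; apply: eq_bigr => i _.
  by rewrite expR_sum -big_split.
rewrite /Fw normr_prod; apply: ler_prod => i _; rewrite normr_ge0 /=.
rewrite normr_prod; apply: ler_prod => j hij; rewrite normr_ge0 /=.
exact: factor_bound.
Qed.

Definition lam := (d * d)%:R / s.
Definition Phi (i j : 'I_d) w :=
  if (i < j)%N then ((j - i)%:R^-1 * \sum_(i <= k < j) expR (lam * `|Z k w|)) else 1.

Lemma exp_rho_bound w : (0 < d)%N ->
  expR (\sum_(i < d) \sum_(j < d | (i < j)%N) rho i j w)
  <= (d * d)%:R^-1 * \sum_(i < d) \sum_(j < d) Phi i j w.
Proof.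
move=> d0.
pose rho' := fun p : 'I_d * 'I_d => if (p.1 < p.2)%N then rho p.1 p.2 w else 0.
have -> : \sum_(i < d) \sum_(j < d | (i < j)%N) rho i j w = \sum_p rho' p.
  rewrite (eq_bigr (fun i => \sum_(j < d) rho' (i, j))); last first.
    by move=> i _; rewrite big_mkcond.
  by rewrite pair_big.
have hN : #|{: 'I_d * 'I_d}| = (d * d)%N by rewrite card_prod card_ord.
have dd : (0 < d * d)%N by rewrite muln_gt0 d0.
have J := @jensen_fin R _ rho'; rewrite hN in J; have {}J := J dd.
apply: le_trans J _; apply: ler_wpM2l; first by rewrite invr_ge0 ler0n.
rewrite pair_big /=; apply: ler_sum => -[i j] _ /=.
rewrite /rho' /Phi /=; case: ifP => hij; last by rewrite mulr0 expR0.
have hji : (0 < j - i)%N by rewrite subn_gt0.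
have m0 : (j - i)%:R != 0 :> R by rewrite pnatr_eq0 -lt0n.
have := @jensen_seq R _ (index_iota i j) (fun k => (d * d)%:R * `|Z k w| / ((j - i)%:R * s)).
rewrite /index_iota size_iota => /(_ hji) J2.
have -> : (d * d)%:R * rho i j w = \sum_(k <- iota i (j - i)) (d * d)%:R * `|Z k w| / ((j - i)%:R * s).
  by rewrite /rho /index_iota mulrA mulr_sumr mulr_suml.
apply: le_trans J2 _; rewrite /index_iota; apply: ler_wpM2l; first by rewrite invr_ge0 ler0n.
apply: ler_sum => k _; rewrite ler_expR /lam.
rewrite [leLHS](_ : _ = (d * d)%:R / s * `|Z k w|) //; field; rewrite m0 andbT; exact: lt0r_neq0.
Qed.

Lemma Delta_gt0 : 0 < Defs.Delta x.
Proof.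
rewrite /Defs.Delta; apply: prodr_gt0 => i _; apply: prodr_gt0 => j hij.
apply: lt_le_trans (gap i j (ltnW hij)).
by rewrite mulr_gt0 // ltr0n subn_gt0.
Qed.

Lemma Phi_ge0 i j w : 0 <= Phi i j w.
Proof.
rewrite /Phi; case: ifP => _ //; apply: mulr_ge0; first by rewrite invr_ge0 ler0n.
by apply: sumr_ge0 => k _; exact: expR_ge0.
Qed.

Lemma mexpZ k : measurable_fun setT (fun w => expR (lam * `|Z k w|)).
Proof.
have h1 : measurable_fun setT (fun w => lam * `|Z k w|).
  apply: measurable_funM; first exact: measurable_cst.
  exact: (measurableT_comp (@normr_measurable R setT) (mZ k)).
exact: (measurableT_comp (@measurable_expR R) h1).
Qed.

Lemma mPhi i j : measurable_fun setT (Phi i j).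
Proof.
rewrite /Phi; case: (i < j)%N; last exact: measurable_cst.
apply: measurable_funM; first exact: measurable_cst.
by apply: measurable_sum => k; exact: mexpZ.
Qed.

Lemma Phi_int (Kr : R) (hK : forall k, (\int[P]_w (expR (lam * `|Z k w|))%:E <= Kr%:E)%E)
  (Kr1 : 1 <= Kr) i j : (\int[P]_w (Phi i j w)%:E <= Kr%:E)%E.
Proof.
rewrite /Phi; have [hij|hij] := boolP (i < j)%N; rewrite ?hij ?(negbTE hij); last first.
  rewrite integral_cst // mul1e; have hP : P [set: T] = 1%E := probability_setT P.
  by rewrite [X in (X <= _)%E](_ : _ = 1%E) ?lee_fin //; exact: hP.
have hji : (0 < j - i)%N by rewrite subn_gt0.
under eq_integral do rewrite EFinM -sumEFin.
rewrite ge0_integralZl_EFin //.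
- rewrite (@ge0_integral_sum _ _ _ P setT measurableT nat (fun k w => (expR (lam * `|Z k w|))%:E)); last 2 first.
  + by move=> k; apply/measurable_EFinP; exact: mexpZ.
  + by move=> k w _; rewrite lee_fin expR_ge0.
  apply: (@le_trans _ _ (((j - i)%:R^-1)%:E * \sum_(k <- index_iota i j) Kr%:E)%E).
    by apply: lee_wpmul2l; [rewrite lee_fin invr_ge0 ler0n | apply: lee_sum => k _; exact: hK].
  rewrite sumEFin sum_const_seq /index_iota size_iota -EFinM lee_fin.
  by rewrite -[Kr *+ _]mulr_natr mulrCA mulVf ?mulr1 // pnatr_eq0 -lt0n.
- by move=> w _; rewrite sumEFin lee_fin; apply: sumr_ge0 => k _; exact: expR_ge0.
- rewrite [X in measurable_fun _ X](_ : _ = EFin \o (fun w => \sum_(i <= k < j) expR (lam * `|Z k w|))); last first.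
    by apply/funext => w; rewrite /= sumEFin.
  by apply/measurable_EFinP; apply: measurable_sum => k; exact: mexpZ.
Qed.

Lemma int_bound (Kr : R) (hK : forall k, (\int[P]_w (expR (lam * `|Z k w|))%:E <= Kr%:E)%E)
  (Kr1 : 1 <= Kr) : (0 < d)%N ->
  (\int[P]_w (`|Fw x w|)%:E <= (Defs.Delta x * Kr)%:E)%E.
Proof.
move=> d0.
have dd : (d * d)%:R != 0 :> R by rewrite pnatr_eq0 -lt0n muln_gt0 d0.
set c := Defs.Delta x * (d * d)%:R^-1.
have c0 : 0 <= c by apply: mulr_ge0; [exact: ltW Delta_gt0 | rewrite invr_ge0 ler0n].
have mPhiE i j : measurable_fun setT (fun w => (Phi i j w)%:E).
  by apply/measurable_EFinP; exact: mPhi.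
have mS i : measurable_fun setT (fun w => (\sum_(j < d) (Phi i j w)%:E)%E).
  rewrite [X in measurable_fun _ X](_ : _ = EFin \o (fun w => \sum_(j < d) Phi i j w)); last first.
    by apply/funext => w; rewrite /= sumEFin.
  by apply/measurable_EFinP; apply: measurable_sum => j; exact: mPhi.
have mSS : measurable_fun setT (fun w => (\sum_(i < d) \sum_(j < d) (Phi i j w)%:E)%E).
  rewrite [X in measurable_fun _ X](_ : _ = EFin \o (fun w => \sum_(i < d) \sum_(j < d) Phi i j w)); last first.
    apply/funext => w; rewrite /=; under eq_bigr do rewrite sumEFin.
    by rewrite sumEFin.
  apply/measurable_EFinP; apply: measurable_sum => i.
  by apply: measurable_sum => j; exact: mPhi.
apply: (@le_trans _ _ (\int[P]_w (c%:E * (\sum_(i < d) \sum_(j < d) (Phi i j w)%:E)))%E).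
  apply: ge0_le_integral.
  - exact: measurableT.
  - by move=> w _; rewrite lee_fin normr_ge0.
  - apply/measurable_EFinP.
    exact: (measurableT_comp (@normr_measurable R setT) (@mF d x)).
  - rewrite [X in measurable_fun _ X](_ : _ = EFin \o (fun w => c * \sum_(i < d) \sum_(j < d) Phi i j w)); last first.
      apply/funext => w; rewrite /=; under eq_bigr do rewrite sumEFin.
      by rewrite sumEFin EFinM.
    apply/measurable_EFinP; apply: measurable_funM; first exact: measurable_cst.
    apply: measurable_sum => i; apply: measurable_sum => j; exact: mPhi.
  - move=> w _.
    under eq_bigr do rewrite sumEFin.
    rewrite sumEFin -EFinM lee_fin.
    apply: le_trans (F_bound w) _; rewrite /c -mulrA.
    apply: ler_wpM2l; first exact: ltW Delta_gt0.
    exact: exp_rho_bound.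
rewrite ge0_integralZl_EFin //; last first.
  by move=> w _; apply: sume_ge0 => i _; apply: sume_ge0 => j _; rewrite lee_fin Phi_ge0.
rewrite (@ge0_integral_sum _ _ _ P setT measurableT 'I_d (fun i w => (\sum_(j < d) (Phi i j w)%:E)%E)); last 2 first.
  - exact: mS.
  - by move=> i w _; apply: sume_ge0 => j _; rewrite lee_fin Phi_ge0.
have hI i : (\int[P]_w (\sum_(j < d) (Phi i j w)%:E) = \sum_(j < d) \int[P]_w (Phi i j w)%:E)%E.
  rewrite (@ge0_integral_sum _ _ _ P setT measurableT 'I_d (fun j w => (Phi i j w)%:E)) //.
  by move=> j w _; rewrite lee_fin Phi_ge0.
under eq_bigr do rewrite hI.
apply: (@le_trans _ _ (c%:E * \sum_(i < d) \sum_(j < d) Kr%:E)%E).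
  apply: lee_wpmul2l; first by rewrite lee_fin.
  apply: lee_sum => i _; apply: lee_sum => j _; exact: Phi_int.
under eq_bigr do rewrite sumEFin.
rewrite sumEFin -EFinM lee_fin !sumr_const !card_ord -mulrnA -mulr_natl /c.
rewrite [leLHS](_ : _ = Defs.Delta x * Kr) //; field; by rewrite pnatr_eq0 -lt0n.
Qed.

Lemma Fw_ge0 w : (forall k : 'I_d, 0 <= Z k w) -> 0 <= Fw x w.
Proof.
move=> hk; rewrite /Fw; apply: prodr_ge0 => i _; apply: prodr_ge0 => j hij.
rewrite -addrA eta_diff; last exact: ltnW.
apply: addr_ge0.
  apply: le_trans (gap i j (ltnW hij)); apply: mulr_ge0 => //; exact: ltW.
rewrite big_seq_cond; apply: sumr_ge0 => k /andP[] /[!mem_index_iota] /andP[_ hkj] _.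
have hkd : (k < d)%N by exact: ltn_trans hkj (ltn_ord j).
exact: (hk (Ordinal hkd)).
Qed.

Lemma h_ge0 : (0 <= \int[P]_w (Fw x w)%:E)%E.
Proof.
have ae : \forall w \ae P, forall k : 'I_d, 0 <= Z k w.
  apply: filter_forall => k.
  exists (Z k @^-1` `]-oo, 0[); split.
  - by rewrite -[X in measurable X]setTI; exact: (mZ k measurableT _ (measurable_itv _)).
  - rewrite Z_copies; last exact: measurable_itv.
    have -> : zeta @^-1` `]-oo, 0[ = set0.
      apply/seteqP; split => w //=; rewrite in_itv /= => h.
      by have := zeta_ge1 w; rewrite leNgt (lt_trans h) // ltr01.
    exact: measure0.
  - move=> w /= h; rewrite in_itv /= ltNge; apply/negP => h'; exact: h h'.
rewrite integralE.
have -> : (\int[P]_w ((fun w => (Fw x w)%:E)^\- w) = 0)%E.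
  apply/eqP; rewrite eq_le; apply/andP; split; last first.
    by apply: integral_ge0 => w _; exact: funeneg_ge0.
  apply: (@le_trans _ _ (\int[P]_w (cst 0%E w))%E); last by rewrite integral0.
  apply: ae_ge0_le_integral.
  - exact: measurableT.
  - by move=> w _; exact: funeneg_ge0.
  - apply: measurable_funeneg; apply/measurable_EFinP; exact: (@mF d x).
  - by move=> w _.
  - exact: measurable_cst.
  - apply: filterS ae => w hw _.
    rewrite funenegE ge_max lexx andbT leeNl oppe0 lee_fin.
    exact: Fw_ge0.
rewrite sube0; apply: integral_ge0 => w _; exact: funepos_ge0.
Qed.

End Pt.
Lemma K_bound (u lam : R) k : 0 < u -> 0 <= lam -> lam <= u / 2 ->
  (\int[P]_w (expR (u * zeta w))%:E < +oo)%E ->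
  (\int[P]_w (expR (lam * `|Z k w|))%:E <=
     (1 + 2 * lam / u * fine (\int[P]_w (expR (u * zeta w))%:E))%:E)%E.
Proof.
move=> u0 l0 lu fin.
have mphi : measurable_fun setT (fun y : R => expR (lam * `|y|)).
  have h1 : measurable_fun setT (fun y : R => lam * `|y|).
    apply: measurable_funM; first exact: measurable_cst.
    exact: (@normr_measurable R setT).
  exact: (measurableT_comp (@measurable_expR R) h1).
rewrite (@law_integral R dT T P (Z k) zeta (mZ k) mzeta (Z_copies k) _ mphi); last first.
  by move=> y; exact: expR_ge0.
have mEz : measurable_fun setT (fun w => expR (u * zeta w)).
  have h1 : measurable_fun setT (fun w => u * zeta w).
    by apply: measurable_funM; [exact: measurable_cst | exact: mzeta].
  exact: (measurableT_comp (@measurable_expR R) h1).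
set M := (\int[P]_w (expR (u * zeta w))%:E)%E.
have M0 : (0 <= M)%E by apply: integral_ge0 => w _; rewrite lee_fin expR_ge0.
have Mfin : M \is a fin_num by rewrite ge0_fin_numE.
have c0 : 0 <= 2 * lam / u by apply: divr_ge0; [apply: mulr_ge0 | exact: ltW].
apply: (@le_trans _ _ (\int[P]_w ((1%:E + (2 * lam / u)%:E * (expR (u * zeta w))%:E)))%E).
  apply: ge0_le_integral.
  - exact: measurableT.
  - by move=> w _; rewrite lee_fin expR_ge0.
  - apply/measurable_EFinP.
    have h1 : measurable_fun setT (fun w => lam * `|zeta w|).
      apply: measurable_funM; first exact: measurable_cst.
      exact: (measurableT_comp (@normr_measurable R setT) mzeta).
    exact: (measurableT_comp (@measurable_expR R) h1).
  - apply: emeasurable_funD; first exact: measurable_cst.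
    apply: emeasurable_funM; first exact: measurable_cst.
    by apply/measurable_EFinP.
  - move=> w _; rewrite -EFinM -EFinD lee_fin.
    have z0 : 0 <= zeta w by apply: le_trans (zeta_ge1 w); exact: ler01.
    by rewrite ger0_norm //; exact: exp_small.
rewrite ge0_integralD //; last 2 first.
  - by move=> w _; rewrite -EFinM lee_fin; apply: mulr_ge0 => //; exact: expR_ge0.
  - apply: emeasurable_funM; first exact: measurable_cst.
    by apply/measurable_EFinP.
rewrite ge0_integralZl_EFin //.
rewrite integral_cst //.
have hP : P [set: T] = 1%E := probability_setT P.
rewrite [X in (_ * X + _)%E](_ : _ = 1%E); last exact: hP.
by rewrite mule1 -/M -(fineK Mfin) -EFinM -EFinD.
by apply/measurable_EFinP.
Qed.

Lemma int_bound0 (x : 'I_0 -> R) (Kr : R) : 1 <= Kr ->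
  (\int[P]_w (`|Fw x w|)%:E <= (Defs.Delta x * Kr)%:E)%E.
Proof.
move=> Kr1.
under eq_integral do rewrite /Fw big_ord0 normr1.
rewrite /Defs.Delta big_ord0 mul1r integral_cst //.
have hP : P [set: T] = 1%E := probability_setT P.
by rewrite [X in (_ * X <= _)%E](_ : _ = 1%E) ?mule1 ?lee_fin //; exact: hP.
Qed.

End Main.

Theorem lemma4p1 (R : realType) (dT : measure_display) (T : measurableType dT)
  (P : probability T R) (X zeta : T -> R) (Z : nat -> T -> R)
  (mX : measurable_fun setT X) (mzeta : measurable_fun setT zeta)
  (mZ : forall n, measurable_fun setT (Z n))
  (zeta_ge1 : forall w, 1 <= zeta w)
  (Z_copies : forall n (A : set R), measurable A ->
     P (Z n @^-1` A) = P (zeta @^-1` A))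
  (Z_indep : mutually_independent P Z)
  (condX : condition_ii' P X zeta)
  (expmom : exists u : R, 0 < u /\
     (\int[P]_w (expR (u * zeta w))%:E < +oo)%E)
  (a eps : R) (ha : 0 < a) (heps : 0 < eps) (hae : 2 * a < 1/2 - eps) :
  exists t0 c : R, 0 < t0 /\ 0 < c /\
    forall t : R, t0 < t ->
    forall d : nat, d%:R <= t `^ a ->
    forall gamma : R, 0 < gamma -> gamma < 1/2 - 2 * a - eps ->
    forall x : 'I_d -> R, @Wte R d t eps x ->
      ((1 - c / t `^ gamma)%:E * h P Z x <= (Delta x)%:E)%E.
Proof.
have [u [u0 uint]] := expmom.
set M := fine (\int[P]_w (expR (u * zeta w))%:E).
have M0 : 0 <= M by apply: fine_ge0; apply: integral_ge0 => w _; rewrite lee_fin expR_ge0.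
set G := 1/2 - 2 * a - eps.
have G0 : 0 < G by rewrite /G; lra.
set c := 2 * M / u + 1.
have cM : 0 <= 2 * M / u by apply: divr_ge0; [apply: mulr_ge0 | exact: ltW].
have c0 : 0 < c by rewrite /c; lra.
set t0 := Num.max 1 ((2 / u) `^ G^-1).
exists t0, c; split; first by rewrite lt_max ltr01.
split => // t ht d hd gamma g0 gG x hx.
have t1 : 1 < t by apply: le_lt_trans ht; rewrite le_max lexx.
have tpos : 0 < t by apply: lt_trans t1; exact: ltr01.
set s := t `^ (1/2 - eps).
have s0 : 0 < s by exact: powR_gt0.
have hx' : forall i j : 'I_d, val j = (val i).+1 -> s < x j - x i by exact: hx.
set lam := (d * d)%:R / s.
have tG0 : 0 < t `^ G by exact: powR_gt0.
have tg0 : 0 < t `^ gamma by exact: powR_gt0.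
have ta0 : 0 <= t `^ a by exact: powR_ge0.
have lamG : lam * t `^ G <= 1.
  have hdd : (d * d)%:R <= t `^ a * t `^ a.
    by rewrite natrM; apply: ler_pM => //; exact: ler0n.
  have hs : t `^ a * t `^ a * t `^ G = s.
    rewrite -!powRD ?(gt_eqF tpos) ?implybT //.
    by rewrite [X in t `^ X](_ : _ = 1/2 - eps) // /G; lra.
  rewrite /lam mulrAC ler_pdivrMr // mul1r -hs.
  by apply: ler_wpM2r => //; exact: ltW.
have hlam0 : 0 <= lam by apply: divr_ge0; [exact: ler0n | exact: ltW].
have tGu : 2 / u <= t `^ G.
  have h1 : (2 / u) `^ G^-1 <= t by apply: ltW; apply: le_lt_trans ht; rewrite le_max lexx orbT.
  have h2 := @ge0_ler_powR R G (ltW G0) ((2 / u) `^ G^-1) t.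
  rewrite !nnegrE in h2; have := h2 (powR_ge0 _ _) (ltW tpos) h1.
  rewrite -powRrM mulVf ?(gt_eqF G0) // powRr1 //; apply: divr_ge0 => //; exact: ltW.
have lamu : lam <= u / 2.
  have : lam * (2 / u) <= 1 by apply: le_trans lamG; apply: ler_wpM2l.
  move=> hl; have -> : lam = lam * (2 / u) * (u / 2) by field; exact: lt0r_neq0.
  rewrite -[X in _ <= X]mul1r; apply: ler_wpM2r => //.
  by apply: divr_ge0 => //; exact: ltW.
have tgG : t `^ gamma <= t `^ G by apply: ler_powR => //; exact: ltW.
have lamg : lam * t `^ gamma <= 1 by apply: le_trans lamG; apply: ler_wpM2l.
set Kr := 1 + 2 * lam / u * M.
have Kr1 : 1 <= Kr by rewrite /Kr lerDl; apply: mulr_ge0 => //; apply: divr_ge0 => //;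
  [apply: mulr_ge0 | exact: ltW].
have hK k : (\int[P]_w (expR (lam * `|Z k w|))%:E <= Kr%:E)%E.
  exact: (@K_bound R dT T P zeta Z mzeta mZ zeta_ge1 Z_copies u lam k u0 hlam0 lamu uint).
have IB : (\int[P]_w (`|@Fw R dT T Z d x w|)%:E <= (Delta x * Kr)%:E)%E.
  case: (posnP d) => [d0|dpos].
    by subst d; exact: (@int_bound0 R dT T P Z x Kr Kr1).
  exact: (@int_bound R dT T P Z mZ d x s s0 hx' Kr hK Kr1 dpos).
have hh : (h P Z x <= (Delta x * Kr)%:E)%E.
  apply: le_trans IB.
  apply: le_trans (lee_abs _) _.
  rewrite [X in (_ <= X)%E](_ : _ = \int[P]_w `|(@Fw R dT T Z d x w)%:E|)%E; last first.
    by apply: eq_integral => w _; rewrite abse_EFin.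
  apply: le_abse_integral => //; apply/measurable_EFinP; exact: (@mF R dT T Z mZ d x).
have h0 : (0 <= h P Z x)%E by exact: (@h_ge0 R dT T P zeta Z mZ zeta_ge1 Z_copies d x s s0 hx').
have D0 : 0 < Delta x by exact: (@Delta_gt0 R d x s s0 hx').
set q := c / t `^ gamma.
have hq : 2 * lam / u * M <= q.
  have l1 : lam <= 1 / t `^ gamma by rewrite ler_pdivlMr.
  have -> : 2 * lam / u * M = (2 * M / u) * lam by field; exact: lt0r_neq0.
  apply: le_trans (ler_wpM2l cM l1) _.
  rewrite /q mulrA mulr1; apply: ler_wpM2r; first by rewrite invr_ge0; exact: ltW.
  rewrite /c; lra.
have [k0|k0] := leP (1 - q) 0.
  apply: le_trans (_ : (0 <= _)%E); last by rewrite lee_fin; exact: ltW.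
  by apply: mule_le0_ge0 => //; rewrite lee_fin.
apply: le_trans (lee_wpmul2l _ hh) _; first by rewrite lee_fin; exact: ltW.
rewrite -EFinM lee_fin.
have : (1 - q) * Kr <= 1 by rewrite /Kr; nra.
move=> hk; rewrite mulrCA; rewrite -[X in _ <= X]mulr1.
by apply: ler_wpM2l => //; exact: ltW.
Qed.
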